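(* If $\mathsf{S}_{\mathrm{L}}(\{\mathcal{I}_j\})<\mathsf{M}^\star(\{\mathcal{I}_j\})$, then there exists some $\ell\in\bigcup_j\mathcal{I}_j$ for which $\mathsf{S}_{\mathrm{L}}(\{\mathcal{I}_j\setminus\{\ell\}\})=\mathsf{S}_{\mathrm{L}}(\{\mathcal{I}_j\})$.
   Context: Network model: $n$ clients $c_1,\dots,c_n$, finite sets $\mathcal{I}_1,\dots,\mathcal{I}_n$ of message indices (the family $\{\mathcal{I}_j\}$); messages $X_i$ ($i\in\bigcup_j\mathcal{I}_j$) i.i.d. uniform on a finite field $\mathbb{F}$ with $|\mathbb{F}|>n$; client $c_j$ holds $\{X_i:i\in\mathcal{I}_j\}$; $\underline{X}$ is the vector of all messages. $\{\mathcal{I}_j\setminus\{\ell\}\}$ denotes the family $(\mathcal{I}_1\setminus\{\ell\},\dots,\mathcal{I}_n\setminus\{\ell\})$. A protocol: in each of $t$ rounds one client broadcasts to all an element of $\mathbb{F}$ that is a function of its own messages, the round index, and all previous broadcasts; $\mathbf{T}(\underline{X})\in\mathbb{F}^t$ collects the broadcasts ($t$ = number of transmissions). Linear protocol: each broadcast is an $\mathbb{F}$-linear combination of the transmitter's messages, so $\mathbf{T}(\underline{X})=A\underline{X}$. A protocol generates a SK if there are functions $\mathsf{k}_j$ with $K=\mathsf{k}_1(\{X_i:i\in\mathcal{I}_1\},\mathbf{T}(\underline{X}))$ such that (i) $\mathsf{k}_j(\{X_i:i\in\mathcal{I}_j\},\mathbf{T}(\underline{X}))=K$ a.s. for all $j$;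 (ii) $K$ is uniform on $\mathbb{F}$; (iii) $I(K;\mathbf{T}(\underline{X}))=0$. $\mathsf{S}_{\mathrm{L}}$ is the minimum number of transmissions of a linear protocol generating a SK ($\infty$ if none). $\mathsf{M}^\star(\{\mathcal{I}_j\})$ is the optimal value of: minimize $\sum_{j\in[n]}a_j$ over $a\in\mathbb{Z}^n$ subject to $\sum_{j\in\mathcal{S}}a_j\ge\left|\bigcap_{j\in[n]\setminus\mathcal{S}}\bar{\mathcal{I}}_j\right|$ for every nonempty proper $\mathcal{S}\subsetneq[n]$, where $\bar{\mathcal{I}}_j=(\bigcup_i\mathcal{I}_i)\setminus\mathcal{I}_j$. (It is known that a protocol achieving omniscience, i.e. after which every client can recover all of $\underline{X}$ with probability 1, needs at least $\mathsf{M}^\star$ transmissions.) *)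

(* Defs.v *)
From HB Require Import structures.
From mathcomp Require Import all_boot all_order all_algebra.
From Stdlib Require Import ClassicalEpsilon.
Set Implicit Arguments. Unset Strict Implicit. Unset Printing Implicit Defensive.
Import Order.TTheory GRing.Theory Num.Theory.
Local Open Scope ring_scope.

(* Message indices are drawn from 'I_m; client j (j : 'I_n) holds the
   messages indexed by I j.  The message vector X is a column vector
   'cV[F]_m, uniform on F^m (messages with indices outside the union of
   the I j are held by nobody and are irrelevant). *)

Definition asb (P : Prop) : bool :=
  if excluded_middle_informative P then true else false.

Definition restr (F : finFieldType) (m : nat) (S : {set 'I_m})
  (X : 'cV[F]_m) : 'cV[F]_m :=
  \col_i (if i \in S then X i 0 else 0).

Definition Pr (F : finFieldType) (m : nat) (E : pred 'cV[F]_m) : rat :=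
  (#|E|%:R / #|{: 'cV[F]_m}|%:R)%R.

(* A linear protocol with t transmissions: in round r client (s r)
   broadcasts row r of A times X, A r i = 0 unless i is held by s r.
   The vector of all broadcasts is T(X) = A *m X. *)
Definition lin_protocol (F : finFieldType) (n m t : nat)
  (I : 'I_n -> {set 'I_m}) (s : 'I_t -> 'I_n) (A : 'M[F]_(t, m)) : Prop :=
  forall (r : 'I_t) (i : 'I_m), i \notin I (s r) -> A r i = 0.

(* The protocol (s, A) generates a secret key: there are key functions k j,
   client j computing k j (its own messages) (the broadcasts), such that
   (i) all clients agree (for every realisation, i.e. a.s. under the
       uniform distribution), (ii) the key is uniform on F,
   (iii) the key is independent of the broadcasts (I(K;T) = 0). *)
Definition generates_SK (F : finFieldType) (n m t : nat)
  (I : 'I_n -> {set 'I_m}) (s : 'I_t -> 'I_n) (A : 'M[F]_(t, m)) : Prop :=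
  exists k : 'I_n -> 'cV[F]_m -> 'cV[F]_t -> F,
    let key j (X : 'cV[F]_m) := k j (restr (I j) X) (A *m X) in
    [/\ (forall j j' X, key j X = key j' X),
        (forall j (c : F), Pr (fun X => key j X == c) = (1 / #|F|%:R)%R) &
        (forall j (c : F) (v : 'cV[F]_t),
           Pr (fun X => (key j X == c) && (A *m X == v))
           = (Pr (fun X => key j X == c) * Pr (fun X => A *m X == v))%R)].

Definition SK_achievable (F : finFieldType) (n m : nat)
  (I : 'I_n -> {set 'I_m}) (t : nat) : Prop :=
  exists (s : 'I_t -> 'I_n) (A : 'M[F]_(t, m)),
    lin_protocol I s A /\ generates_SK I s A.

(* S_L : minimal number of transmissions; None encodes +infinity *)
Definition SL (F : finFieldType) (n m : nat) (I : 'I_n -> {set 'I_m})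
  : option nat :=
  match excluded_middle_informative
          (exists t, asb (SK_achievable F I t)) with
  | left H => Some (ex_minn H)
  | right _ => None
  end.

Definition Uall (n m : nat) (I : 'I_n -> {set 'I_m}) : {set 'I_m} :=
  \bigcup_(j < n) I j.

Definition Mfeasible (n m : nat) (I : 'I_n -> {set 'I_m}) (a : 'I_n -> int)
  : Prop :=
  forall S : {set 'I_n}, S != set0 -> S != setT ->
    (#|\bigcap_(j in ~: S) (Uall I :\: I j)|%:Z <= \sum_(j in S) a j)%R.

(* M* : optimal value of the integer program; None encodes -infinity
   (the program is always feasible, so the only alternative to an attained
   minimum is unboundedness, which happens only for n = 1) *)
Definition Mstar (n m : nat) (I : 'I_n -> {set 'I_m}) : option int :=
  match excluded_middle_informative
          (exists a, Mfeasible I a /\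
             forall b, Mfeasible I b -> (\sum_j a j <= \sum_j b j)%R) with
  | left H => Some (\sum_j (proj1_sig (constructive_indefinite_description _ H)) j)%R
  | right _ => None
  end.

Definition SL_lt_Mstar (sl : option nat) (ms : option int) : Prop :=
  match sl, ms with
  | Some s, Some v => (s%:Z < v)%R
  | _, _ => False
  end.

(* Main.v *)
Require Import Defs.
From HB Require Import structures.
From mathcomp Require Import all_boot all_order all_algebra.
From Stdlib Require Import ClassicalEpsilon Classical.
Set Implicit Arguments. Unset Strict Implicit. Unset Printing Implicit Defensive.
Import Order.TTheory GRing.Theory Num.Theory.
Local Open Scope ring_scope.

Lemma ker_exists (F : fieldType) (k w : nat) (B : 'M[F]_(k, w)) :
  (k < w)%N -> exists u : 'cV[F]_w, u != 0 /\ B *m u = 0.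
Proof.
move=> kw.
have : kermx B^T != 0.
  rewrite kermx_eq0 -row_leq_rank -ltnNge.
  by apply: leq_ltn_trans (rank_leq_col _) kw.
move=> /eqP Hne.
have [i Hi] : exists i, row i (kermx B^T) != 0.
  case: (pickP (fun i => row i (kermx B^T) != 0)) => [i Hi|H]; first by exists i.
  exfalso; apply: Hne; apply/row_matrixP => i; rewrite row0; apply/eqP.
  by have := H i => /= /negbFE.
exists (row i (kermx B^T))^T; split.
  by rewrite trmx_eq0.
apply: trmx_inj; rewrite trmx_mul trmxK -row_mul mulmx_ker row0 trmx0 //.
Qed.

Lemma card_inj_pred (T : finType) (f : T -> T) (q : pred T) :
  injective f -> #|[pred x | q (f x)]| = #|q|.
Proof.
move=> inj; have := card_preimset [set x | q x] inj.
move=> H; transitivity #|[set x | q x]|.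
  by rewrite -H; apply: eq_card => x; rewrite !inE.
by apply: eq_card => x; rewrite !inE.
Qed.

Lemma count_shift (F : finFieldType) (m : nat) (v : 'cV[F]_m) (l : 'I_m)
  (q : pred 'cV[F]_m) :
  v l 0 != 0 -> (forall X c, q (X + c *: v) = q X) ->
  #|[pred X | q (restr (~: [set l]) X)]| = #|q|.
Proof.
move=> vl0 hq.
pose b X := restr (~: [set l]) X + (X l 0 / v l 0) *: v.
have bl X : b X l 0 = X l 0.
  rewrite /b /restr !mxE !inE eqxx /= add0r.
  by rewrite -mulrA mulVf // mulr1.
have injb : injective b.
  move=> X Y hXY.
  have el : X l 0 = Y l 0 by rewrite -bl hXY bl.
  have hr : restr (~: [set l]) X = restr (~: [set l]) Y.
    by move: hXY; rewrite /b el => /addIr.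
  apply/matrixP => i j; rewrite (ord1 j).
  case: (eqVneq i l) => [->//|nil].
  have := congr1 (fun M : 'cV[F]_m => M i 0) hr.
  by rewrite /restr !mxE !inE nil.
rewrite -(card_inj_pred q injb); apply: eq_card => X /=.
by rewrite !inE /b hq.
Qed.

Lemma remove_msg (F : finFieldType) (n m t : nat) (I : 'I_n -> {set 'I_m})
  (s : 'I_t -> 'I_n) (A : 'M[F]_(t, m)) (j0 : 'I_n) (v : 'cV[F]_m) (l : 'I_m) :
  lin_protocol I s A -> generates_SK I s A -> A *m v = 0 ->
  (forall i, i \in I j0 -> v i 0 = 0) -> v l 0 != 0 ->
  SK_achievable F (fun j => I j :\ l) t.
Proof.
move=> lin [k [agr unif ind]] Av vI vl.
pose A' := \matrix_(r, i) (if i == l then 0 else A r i) : 'M[F]_(t, m).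
pose Z := @restr F m (~: [set l]).
have hA X : A' *m X = A *m Z X.
  apply/matrixP => r j; rewrite !mxE; apply: eq_bigr => i _.
  rewrite !mxE !inE (ord1 j); by case: eqP => _; rewrite ?mul0r ?mulr0.
have hR j X : restr (I j) (restr (I j :\ l) X) = restr (I j) (Z X).
  apply/matrixP => i c; rewrite !mxE !inE; by case: (i \in I j); rewrite ?andbT.
pose key j X := k j (restr (I j) X) (A *m X).
have inv X c : key j0 (X + c *: v) = key j0 X.
  rewrite /key mulmxDr -scalemxAr Av scaler0 addr0; congr k.
  apply/matrixP => i j; rewrite !mxE; case: ifP => // /vI ->.
  by rewrite mulr0 addr0.
have cnt j (p : F -> 'cV[F]_t -> bool) :
  #|[pred X | p (k j (restr (I j) (restr (I j :\ l) X)) (A' *m X)) (A' *m X)]|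
  = #|[pred X | p (key j X) (A *m X)]|.
  have := @count_shift F m v l (fun X => p (key j0 X) (A *m X)) vl.
  move=> H.
  have -> : #|[pred X | p (key j X) (A *m X)]| = #|[pred X | p (key j0 X) (A *m X)]|.
    by apply: eq_card => X; rewrite !inE /key (agr j j0).
  rewrite -H; last by move=> X c; rewrite inv mulmxDr -scalemxAr Av scaler0 addr0.
  apply: eq_card => X; rewrite !inE /key hA hR (agr j j0) //.
have cntP j (p : F -> 'cV[F]_t -> bool) :
  Pr (fun X => p (k j (restr (I j) (restr (I j :\ l) X)) (A' *m X)) (A' *m X))
  = Pr (fun X => p (key j X) (A *m X)).
  rewrite /Pr; congr (_%:R / _).
  have := cnt j p => H.
  transitivity #|[pred X | p (k j (restr (I j) (restr (I j :\ l) X)) (A' *m X)) (A' *m X)]|.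
    by apply: eq_card.
  by rewrite H; apply: eq_card.
exists s, A'; split.
  move=> r i; rewrite !inE mxE; case: eqP => //= _ /lin //.
exists (fun j x y => k j (restr (I j) x) y) => /=; split.
- by move=> j j' X; rewrite !hR hA (agr j j').
- move=> j c; rewrite (cntP j (fun a _ => a == c)) /=.
  exact: unif.
- move=> j c w.
  rewrite (cntP j (fun a b => (a == c) && (b == w))) /=.
  rewrite (cntP j (fun a _ => a == c)) /=.
  rewrite (cntP j (fun _ b => b == w)) /=.
  exact: ind.
Qed.

Lemma sum_fib (n t : nat) (s : 'I_t -> 'I_n) (S : {set 'I_n}) :
  (\sum_(j in S) #|[set r | s r == j]| = #|[set r | s r \in S]|)%N.
Proof.
rewrite -sum1_card (partition_big s (mem S)) /=; last by move=> r; rewrite inE.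
apply: eq_bigr => j jS; rewrite -sum1_card; apply: eq_bigl => r.
rewrite !inE; case: eqP => [->|_]; by rewrite ?jS ?andbF.
Qed.

Lemma sumPosz (n : nat) (S : {set 'I_n}) (f : 'I_n -> nat) :
  (\sum_(j in S) (f j)%:Z = (\sum_(j in S) f j)%N%:Z)%R.
Proof. by elim/big_rec2: _ => // j a b _ ->; rewrite PoszD. Qed.

Lemma omni (F : finFieldType) (n m t : nat) (I : 'I_n -> {set 'I_m})
  (s : 'I_t -> 'I_n) (A : 'M[F]_(t, m)) :
  lin_protocol I s A ->
  (forall j (v : 'cV[F]_m), A *m v = 0 ->
     (forall i, v i 0 != 0 -> i \in Uall I :\: I j) -> v = 0) ->
  Mfeasible I (fun j => #|[set r | s r == j]|%:Z).
Proof.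
move=> lin H S S0 ST.
set W := \bigcap_(j in ~: S) (Uall I :\: I j).
have [j0 Hj0] : exists j0, j0 \in ~: S.
  case: (pickP (fun j => j \in ~: S)) => [j Hj|HS]; first by exists j.
  exfalso; move/eqP: ST; apply; apply/setP => j; rewrite inE.
  by have := HS j; rewrite inE => /negbFE.
rewrite sumPosz sum_fib lez_nat leqNgt; apply/negP => lt.
have [u [u0 Bu]] := ker_exists
  (\matrix_(q, p) A (enum_val q) (enum_val p) : 'M[F]_(#|[set r | s r \in S]|, #|W|)) lt.
pose v : 'cV[F]_m := \col_i \sum_(p | enum_val p == i) u p 0.
have vev (p : 'I_#|W|) : v (enum_val p) 0 = u p 0.
  have E : (fun p' => enum_val p' == enum_val p) =1 pred1 p.
    by move=> p'; apply/eqP/eqP => [/enum_val_inj|->].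
  by rewrite mxE (big_pred1 p E).
have vW i : v i 0 != 0 -> i \in W.
  rewrite mxE; case: (pickP (fun p : 'I_#|W| => enum_val p == i)) => [p /eqP <- _|Hn].
    exact: enum_valP.
  by rewrite big_pred0 ?eqxx.
have Av : A *m v = 0.
  apply/matrixP => r c; rewrite (ord1 c) !mxE.
  under eq_bigr => i _ do rewrite mxE big_distrr /=.
  transitivity (\sum_(p < #|W|) A r (enum_val p) * u p 0).
    rewrite (exchange_big_dep xpredT) //=; apply: eq_bigr => p _.
    by rewrite (big_pred1 (enum_val p)) // => i; rewrite /= eq_sym.
  case: (boolP (s r \in S)) => srS.
    have rin : r \in [set r | s r \in S] by rewrite inE.
    have := congr1 (fun M : 'cV[F]_ _ => M (enum_rank_in rin r) 0) Bu.
    rewrite !mxE => E; apply: (etrans _ E); apply: eq_bigr => p _; by rewrite mxE (enum_rankK_in rin rin).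
  apply: big1 => p _; rewrite lin ?mul0r //.
  have : enum_val p \in W := enum_valP p.
  by move/bigcapP => /(_ (s r)); rewrite inE srS => /(_ isT); rewrite inE => /andP [].
have v0 : v = 0.
  apply: (H j0) => // i /vW /bigcapP; exact.
move/eqP: u0; apply; apply/matrixP => p c; rewrite (ord1 c) mxE -vev v0 mxE //.
Qed.

Lemma asbP (P : Prop) : asb P <-> P.
Proof. by rewrite /asb; case: excluded_middle_informative. Qed.

Lemma PrE (F : finFieldType) (m : nat) (E E' : pred 'cV[F]_m) :
  E =1 E' -> Pr E = Pr E'.
Proof. by move=> h; rewrite /Pr (eq_card h). Qed.

Lemma mono (F : finFieldType) (n m t : nat) (I : 'I_n -> {set 'I_m}) (l : 'I_m) :
  SK_achievable F (fun j => I j :\ l) t -> SK_achievable F I t.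
Proof.
move=> [s [A [lin [k [agr unif ind]]]]].
exists s, A; split.
  move=> r i iI; apply: lin; rewrite !inE (negbTE iI) andbF //.
have hR j X : restr (I j :\ l) (restr (I j) X) = restr (I j :\ l) X.
  apply/matrixP => i c; rewrite !mxE !inE; by case: (i \in I j); rewrite ?andbT ?andbF.
exists (fun j x y => k j (restr (I j :\ l) x) y) => /=; split.
- by move=> j j' X; rewrite !hR.
- by move=> j c; rewrite -(unif j c); apply: PrE => X; rewrite hR.
- move=> j c w; rewrite (PrE (E' := fun X => (k j (restr (I j :\ l) X) (A *m X) == c) && (A *m X == w))); last by move=> X; rewrite hR.
  rewrite (PrE (E := fun X => k j (restr (I j :\ l) (restr (I j) X)) (A *m X) == c) (E' := fun X => (k j (restr (I j :\ l) X) (A *m X) == c))); last by move=> X; rewrite hR.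
  exact: ind.
Qed.

Local Close Scope ring_scope.

Theorem lemma3 (F : finFieldType) (n m : nat) (I : 'I_n -> {set 'I_m})
  (hF : n < #|F|) :
  SL_lt_Mstar (SL F I) (Mstar I) ->
  exists2 l : 'I_m, l \in \bigcup_(j < n) I j &
    SL F (fun j => I j :\ l) = SL F I.
Proof.
rewrite /SL_lt_Mstar.
case dS: (SL F I) => [t0|] //; case dM: (Mstar I) => [M|] // lt.
move: dS lt; rewrite /SL; case: excluded_middle_informative => // ex [].
case: ex_minnP => t Ht tmin <- lt.
have [s [A [lin gen]]] := iffLR (asbP _) Ht.
have [j [v [Av [supp vn]]]] : exists j (v : 'cV[F]_m), (A *m v = 0)%R /\
    (forall i, (v i 0 != 0)%R -> i \in Uall I :\: I j) /\ (v != 0)%R.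
  apply: NNPP => Hn.
  have feas := @omni F n m t I s A lin.
  have /feas {}feas : (forall j (v : 'cV[F]_m), (A *m v = 0)%R ->
     (forall i, (v i 0 != 0)%R -> i \in Uall I :\: I j) -> v = 0%R).
    move=> j v Av sp; case: (eqVneq v 0%R) => // vn; exfalso; apply: Hn.
    by exists j, v.
  move: dM; rewrite /Mstar; case: excluded_middle_informative => // Hm [].
  case: (constructive_indefinite_description _ Hm) => a /= [_ amin] aM.
  have := amin _ feas; rewrite aM.
  have -> : (\sum_j (#|[set r | s r == j]|%:Z) = \sum_(j in [set: 'I_n]) (#|[set r | s r == j]|%:Z))%R.
    by apply: eq_bigl => j; rewrite inE.
  rewrite sumPosz sum_fib.
  have -> : #|[set r | s r \in [set: 'I_n]]| = t.
    by rewrite -[RHS]card_ord; apply: eq_card => r; rewrite !inE.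
  move=> Mt; have := Order.POrderTheory.lt_le_trans lt Mt.
  by rewrite Order.POrderTheory.ltxx.
have [l vl] : exists l, (v l 0 != 0)%R.
  case: (pickP (fun l => (v l 0 != 0)%R)) => [l Hl|Hn]; first by exists l.
  move/eqP: vn; case; apply/matrixP => i c; rewrite (ord1 c) mxE.
  by have := Hn i => /= /negbFE /eqP.
have vI i : i \in I j -> (v i 0 = 0)%R.
  move=> iI; apply/eqP; apply: contraT => /supp; by rewrite inE iI.
exists l.
  by have := supp l vl; rewrite inE => /andP [].
have ach := remove_msg lin gen Av vI vl.
rewrite /SL; case: excluded_middle_informative => [ex'|nex]; last first.
  by exfalso; apply: nex; exists t; apply/asbP.
congr Some; case: ex_minnP => t1 Ht1 tmin1.
apply/eqP; rewrite eqn_leq; apply/andP; split.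
  by apply: tmin1; apply/asbP.
by apply: tmin; apply/asbP; apply: (@mono F n m t1 I l); apply/asbP.
Qed.
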